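(* Let $\mathcal{D}$ be a set of discounting functions and let $\varphi$ be an $\mathrm{LTL}^{\mathrm{disc}}[\mathcal{D}]$ formula. Then there exist LTL formulas $\varphi_{>0}$ and $\varphi_{<1}$ such that $|\varphi_{>0}|$ and $|\varphi_{<1}|$ are both $O(|\varphi|)$ and the following hold for every computation $\pi$: (1) if $[\![\pi,\varphi]\!]>0$ then $\pi\models\varphi_{>0}$, and if $[\![\pi,\varphi]\!]<1$ then $\pi\models\varphi_{<1}$; (2) if $\pi$ is a lasso computation, then $\pi\models\varphi_{>0}$ implies $[\![\pi,\varphi]\!]>0$, and $\pi\models\varphi_{<1}$ implies $[\![\pi,\varphi]\!]<1$.
   Context: Let $AP$ be a finite set of atomic propositions. A computation is an infinite word $\pi=\pi_0\pi_1\pi_2\cdots\in(2^{AP})^\omega$, and $\pi^i=\pi_i\pi_{i+1}\cdots$ denotes its suffix from position $i$. A lasso computation is a computation of the form $u\cdot v^\omega$ with $u,v\in(2^{AP})^*$ and $v\neq\epsilon$. A discounting function is a strictly decreasing function $\eta:\mathbb{N}\to[0,1]$ (where $\mathbb{N}=\{0,1,\dots\}$) with $\lim_{i\to\infty}\eta(i)=0$. For a set $\mathcal{D}$ of discounting functions, the formulas of $\mathrm{LTL}^{\mathrm{disc}}[\mathcal{D}]$ are given by the grammar $\varphi ::= \mathtt{True}\mid p\mid\neg\varphi\mid\varphi\vee\varphi\mid\mathsf{X}\varphi\mid\varphi\,\mathsf{U}\,\varphi\mid\varphi\,\mathsf{U}_\eta\,\varphi$ with $p\in AP$, $\eta\in\mathcal{D}$.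 The satisfaction value $[\![\pi,\varphi]\!]\in[0,1]$ is defined inductively: $[\![\pi,\mathtt{True}]\!]=1$; $[\![\pi,p]\!]=1$ if $p\in\pi_0$ and $0$ otherwise; $[\![\pi,\neg\varphi]\!]=1-[\![\pi,\varphi]\!]$; $[\![\pi,\varphi\vee\psi]\!]=\max\{[\![\pi,\varphi]\!],[\![\pi,\psi]\!]\}$; $[\![\pi,\mathsf{X}\varphi]\!]=[\![\pi^1,\varphi]\!]$; $[\![\pi,\varphi\,\mathsf{U}\,\psi]\!]=\sup_{i\ge0}\min\{[\![\pi^i,\psi]\!],\min_{0\le j<i}[\![\pi^j,\varphi]\!]\}$; $[\![\pi,\varphi\,\mathsf{U}_\eta\,\psi]\!]=\sup_{i\ge0}\min\{\eta(i)[\![\pi^i,\psi]\!],\min_{0\le j<i}\eta(j)[\![\pi^j,\varphi]\!]\}$. An LTL formula is a formula without $\mathsf{U}_\eta$ operators; its value is always in $\{0,1\}$, and $\pi\models\psi$ means $[\![\pi,\psi]\!]=1$ (standard LTL satisfaction). $|\varphi|$ denotes the number of subformulas of $\varphi$. *)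

(* Defs.v *)
From HB Require Import structures.
From mathcomp Require Import all_boot all_order all_algebra.
From mathcomp Require Import boolp classical_sets reals.
Set Implicit Arguments. Unset Strict Implicit. Unset Printing Implicit Defensive.
Import Order.TTheory GRing.Theory Num.Theory.
Local Open Scope ring_scope.
Local Open Scope classical_set_scope.

(* Formulas of LTL^disc[D]; the discount operators are indexed by an
   eqType D, interpreted by eta : D -> (nat -> R) (see the theorem). *)
Inductive dform (AP : finType) (D : eqType) : Type :=
  | FTrue
  | FAtom of AP
  | FNot of dform AP D
  | FOr of dform AP D & dform AP D
  | FNext of dform AP D
  | FUntil of dform AP D & dform AP D
  | FUntilD of D & dform AP D & dform AP D.
Arguments FTrue {AP D}.

Section Syntax.
Variables (AP : finType) (D : eqType).

Fixpoint form_eqb (f g : dform AP D) : bool :=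
  match f, g with
  | FTrue, FTrue => true
  | FAtom p, FAtom q => p == q
  | FNot f1, FNot g1 => form_eqb f1 g1
  | FOr f1 f2, FOr g1 g2 => form_eqb f1 g1 && form_eqb f2 g2
  | FNext f1, FNext g1 => form_eqb f1 g1
  | FUntil f1 f2, FUntil g1 g2 => form_eqb f1 g1 && form_eqb f2 g2
  | FUntilD d f1 f2, FUntilD e g1 g2 =>
      [&& d == e, form_eqb f1 g1 & form_eqb f2 g2]
  | _, _ => false
  end.

Lemma form_eqbP : Equality.axiom form_eqb.
Proof.
elim=> [|p|f1 IH1|f1 IH1 f2 IH2|f1 IH1|f1 IH1 f2 IH2|d f1 IH1 f2 IH2]
       [|q|g1|g1 g2|g1|g1 g2|e g1 g2] /=; try by constructor.
- by apply: (iffP eqP) => [->|[]].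
- by case: (IH1 g1) => [->|H]; constructor => // -[].
- case: (IH1 g1) => [->|H] /=; last by constructor => -[].
  by case: (IH2 g2) => [->|H]; constructor => // -[].
- by case: (IH1 g1) => [->|H]; constructor => // -[].
- case: (IH1 g1) => [->|H] /=; last by constructor => -[].
  by case: (IH2 g2) => [->|H]; constructor => // -[].
- case: (d =P e) => [->|H] /=; last by constructor => -[].
  case: (IH1 g1) => [->|H] /=; last by constructor => -[].
  by case: (IH2 g2) => [->|H]; constructor => // -[].
Qed.

HB.instance Definition _ := hasDecEq.Build (dform AP D) form_eqbP.

Fixpoint subforms (f : dform AP D) : seq (dform AP D) :=
  f :: match f with
       | FTrue | FAtom _ => [::]
       | FNot g | FNext g => subforms g
       | FOr g h | FUntil g h | FUntilD _ g h => subforms g ++ subforms h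
       end.

Definition fsize (f : dform AP D) : nat := size (undup (subforms f)).

Fixpoint is_ltl (f : dform AP D) : bool :=
  match f with
  | FTrue | FAtom _ => true
  | FNot g | FNext g => is_ltl g
  | FOr g h | FUntil g h => is_ltl g && is_ltl h
  | FUntilD _ _ _ => false
  end.
End Syntax.

Definition computation (AP : finType) := nat -> {set AP}.

Definition suffix (AP : finType) (pi : computation AP) (i : nat) : computation AP :=
  fun k => pi (i + k)%N.

Definition is_lasso (AP : finType) (pi : computation AP) : Prop :=
  exists (u v : seq {set AP}), v != [::] /\
    forall i : nat, pi i = if (i < size u)%N then nth finset.set0 u i
                           else nth finset.set0 v ((i - size u) %% size v).

Definition discounting (R : realType) (eta : nat -> R) : Prop :=
  (forall i, 0 <= eta i <= 1) /\
  (forall i j : nat, (i < j)%N -> eta j < eta i) /\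
  (forall e : R, 0 < e -> exists N : nat, forall i, (N <= i)%N -> eta i < e).

Fixpoint dval (R : realType) (AP : finType) (D : eqType) (eta : D -> nat -> R)
    (f : dform AP D) (pi : computation AP) : R :=
  match f with
  | FTrue => 1
  | FAtom p => if p \in pi 0%N then 1 else 0
  | FNot g => 1 - dval eta g pi
  | FOr g h => Order.max (dval eta g pi) (dval eta h pi)
  | FNext g => dval eta g (suffix pi 1)
  | FUntil g h =>
      sup [set x | exists i : nat,
             x = Order.min (dval eta h (suffix pi i))
                   (\big[Order.min/1]_(j < i) dval eta g (suffix pi j))]
  | FUntilD d g h =>
      sup [set x | exists i : nat,
             x = Order.min (eta d i * dval eta h (suffix pi i))
                   (\big[Order.min/1]_(j < i) (eta d j * dval eta g (suffix pi j)))]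
  end.

Definition models (R : realType) (AP : finType) (D : eqType) (eta : D -> nat -> R)
    (pi : computation AP) (f : dform AP D) : Prop := dval eta f pi = 1.

(* Main.v *)
Require Import Defs.
From mathcomp Require Import all_boot all_order all_algebra.
From mathcomp Require Import boolp classical_sets reals.
Import Order.TTheory GRing.Theory Num.Theory.
Local Open Scope ring_scope.
From mathcomp Require Import lra zify.
Local Open Scope classical_set_scope.
Set Implicit Arguments. Unset Strict Implicit.

Section U.
Variable R : realType.
Implicit Types a b : nat -> R.

Definition bm a i := \big[Order.min/1]_(j < i) a j.
Definition US a b := [set x : R | exists i : nat, x = Order.min (b i) (bm a i)].
Definition U a b := sup (US a b).

Definition in01 a := forall i, 0 <= a i <= 1.

Fixpoint pm a i := if i is i'.+1 then Order.min (a 0%N) (pm (fun j => a j.+1) i') else 1.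

Lemma bm_pm a i : bm a i = pm a i.
Proof.
elim: i a => [|i IH] a; first by rewrite /bm big_ord0.
by rewrite /bm big_ord_recl /= -IH.
Qed.

Lemma bm0 a : bm a 0 = 1.
Proof. by rewrite bm_pm. Qed.

Lemma bm_le a i j : (j < i)%N -> bm a i <= a j.
Proof.
rewrite bm_pm; elim: i a j => // i IH a [|j] /= ji; first by rewrite ge_min lexx.
by rewrite ge_min IH ?orbT.
Qed.

Lemma bm_anti a i i' : (i' <= i)%N -> bm a i <= bm a i'.
Proof.
rewrite !bm_pm; elim: i a i' => [|i IH] a [|i'] //= ii.
  rewrite ge_min; apply/orP; right.
  by have := IH (fun j => a j.+1) 0%N isT.
by rewrite le_min ge_min lexx /= ge_min IH ?orbT.
Qed.

Lemma bm_pos a i : (0 < bm a i) <-> (forall j, (j < i)%N -> 0 < a j).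
Proof.
split.
  by move=> H j ji; exact: (lt_le_trans H (bm_le a ji)).
rewrite bm_pm; elim: i a => [|i IH] a H /=; first exact: ltr01.
rewrite lt_min H //=; apply: IH => j ji; exact: H.
Qed.

Lemma bm_1 a i : (forall j, (j < i)%N -> a j = 1) -> bm a i = 1.
Proof.
rewrite bm_pm; elim: i a => [|i IH] a H //=.
rewrite H // IH ?minxx // => j ji; exact: H.
Qed.

Lemma bm_01 a i : in01 a -> 0 <= bm a i <= 1.
Proof.
rewrite bm_pm; elim: i a => [|i IH] a ha /=; first by rewrite ler01 lexx.
have /andP[h1 h2] := IH (fun j => a j.+1) (fun j => ha j.+1).
case/andP: (ha 0%N) => h3 h4.
by rewrite le_min ge_min h1 h3 h4.
Qed.

Lemma US_01 a b x : in01 a -> in01 b -> US a b x -> 0 <= x <= 1.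
Proof.
move=> ha hb [i ->]; case/andP: (bm_01 i ha) => h1 h2; case/andP: (hb i) => h3 h4.
by rewrite le_min ge_min h1 h3 h4.
Qed.

Lemma US_ne a b : US a b !=set0.
Proof. by exists (Order.min (b 0%N) (bm a 0)); exists 0%N. Qed.

Lemma US_ub a b : in01 a -> in01 b -> has_ubound (US a b).
Proof. by move=> ha hb; exists 1 => x /(US_01 ha hb) /andP[]. Qed.

Lemma U_01 a b : in01 a -> in01 b -> 0 <= U a b <= 1.
Proof.
move=> ha hb; apply/andP; split.
  apply: le_trans (ub_le_sup (US_ub ha hb) (ex_intro _ 0%N erefl)).
  by case/andP: (US_01 ha hb (ex_intro _ 0%N erefl)).
by apply: ge_sup; [exact: US_ne| move=> x /(US_01 ha hb) /andP[]].
Qed.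

Lemma U_pos a b : in01 a -> in01 b ->
  0 < U a b <-> exists i, 0 < b i /\ forall j, (j < i)%N -> 0 < a j.
Proof.
move=> ha hb; split.
  move/(sup_gt (US_ne a b)) => [x [i ->]]; rewrite lt_min => /andP[h1 /bm_pos h2].
  by exists i.
move=> [i [h1 h2]]; apply: lt_le_trans (ub_le_sup (US_ub ha hb) (ex_intro _ i erefl)).
by rewrite lt_min h1; apply/bm_pos.
Qed.

Lemma U_1 a b : in01 a -> in01 b ->
  (exists i, b i = 1 /\ forall j, (j < i)%N -> a j = 1) -> U a b = 1.
Proof.
move=> ha hb [i [h1 h2]]; apply/eqP; rewrite eq_le; case/andP: (U_01 ha hb) => _ ->.
apply: le_trans (ub_le_sup (US_ub ha hb) (ex_intro _ i erefl)).
by rewrite h1 bm_1 // minxx.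
Qed.

Lemma argmax (f : nat -> R) N : (0 < N)%N ->
  exists2 k, (k < N)%N & forall i, (i < N)%N -> f i <= f k.
Proof.
elim: N => // N IH _; case: N IH => [|N] IH.
  by exists 0%N => // i; rewrite ltnS leqn0 => /eqP->.
have [k kN hk] := IH isT.
case: (leP (f N.+1) (f k)) => H.
  exists k; first exact: ltnW.
  move=> i; rewrite ltnS leq_eqVlt => /orP[/eqP->//|]; exact: hk.
exists N.+1 => // i; rewrite ltnS leq_eqVlt => /orP[/eqP->//|/hk h].
exact: le_trans h (ltW H).
Qed.

Lemma U_1_inv a b N : in01 a -> in01 b ->
  (forall i, exists i', [/\ (i' <= i)%N, (i' < N)%N & b i' = b i]) ->
  U a b = 1 -> exists i, b i = 1 /\ forall j, (j < i)%N -> a j = 1.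
Proof.
move=> ha hb hN U1.
have N0 : (0 < N)%N by case: (hN 0%N) => i' [_ H _]; exact: leq_ltn_trans (leq0n _) H.
pose e i := Order.min (b i) (bm a i).
have [k kN hk] := argmax e N0.
have : U a b <= e k.
  apply: ge_sup; first exact: US_ne.
  move=> x [i ->]; case: (hN i) => i' [h1 h2 h3].
  apply: le_trans (hk _ h2); rewrite /e -h3 le_min ge_min lexx /=.
  by rewrite ge_min (bm_anti _ h1) orbT.
rewrite U1 /e le_min => /andP[h1 h2].
have eb : b k = 1 by apply/eqP; rewrite eq_le h1 andbT; case/andP: (hb k).
have em : bm a k = 1 by apply/eqP; rewrite eq_le h2 andbT; by case/andP: (bm_01 k ha).
exists k; split => // j jk; apply/eqP; rewrite eq_le; case/andP: (ha j) => _ -> /=.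
by rewrite -em bm_le.
Qed.

End U.

Lemma U_lt1_disc (R : realType) (a b : nat -> R) (c : R) : in01 a -> in01 b ->
  (forall i, (0 < i)%N -> b i <= c) -> c < 1 -> (U a b < 1 <-> b 0%N < 1).
Proof.
move=> ha hb hc c1; split.
  move=> H; apply: le_lt_trans H.
  have := ub_le_sup (US_ub ha hb) (ex_intro _ 0%N erefl).
  by rewrite bm0; case/andP: (hb 0%N) => _ h; rewrite (min_idPl h).
move=> H; apply: (@le_lt_trans _ _ (Order.max (b 0%N) c)); last by rewrite gt_max H c1.
apply: ge_sup; first exact: US_ne.
move=> x [[|i] ->].
  by rewrite bm0; case/andP: (hb 0%N)=> _ h; rewrite (min_idPl h) le_max lexx.
apply: (@le_trans _ _ c); first by rewrite ge_min (hc i.+1 isT).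
by rewrite le_max lexx orbT.
Qed.

Notation sfx := Defs.suffix.
Definition eper (AP : finType) (pi : computation AP) :=
  exists a p, (0 < p)%N /\ forall i, (a <= i)%N -> pi (i + p)%N = pi i.

Lemma eper_suffix AP (pi : computation AP) k : eper pi -> eper (sfx pi k).
Proof.
move=> [a [p [p0 H]]]; exists a, p; split => // i ai.
by rewrite /Defs.suffix addnA H //; apply: leq_trans ai (leq_addl _ _).
Qed.

Lemma suffix0 AP (pi : computation AP) : sfx pi 0 = pi.
Proof. by apply: funext => k. Qed.

Lemma eper_fin AP (pi : computation AP) : eper pi ->
  exists N, forall i, exists i', [/\ (i' <= i)%N, (i' < N)%N & sfx pi i' = sfx pi i].
Proof.
move=> [a [p [p0 H]]]; exists (a + p)%N.
elim/ltn_ind => i IH.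
case: (ltnP i (a + p)) => hi; first by exists i.
have [i' [h1 h2 h3]] := IH (i - p)%N ltac:(lia).
exists i'; split => //; first lia.
rewrite h3; apply: funext => k; rewrite /Defs.suffix.
have -> : (i + k = (i - p + k) + p)%N by lia.
by rewrite H //; lia.
Qed.

Lemma lasso_eper AP (pi : computation AP) : is_lasso pi -> eper pi.
Proof.
move=> [u [v [v0 H]]]; exists (size u), (size v); split.
  by rewrite lt0n size_eq0.
move=> i ui; rewrite !H.
have -> : (i + size v < size u)%N = false by apply/negbTE; rewrite -leqNgt; lia.
have -> : (i < size u)%N = false by apply/negbTE; rewrite -leqNgt.
have -> : (i + size v - size u = (i - size u) + size v)%N by lia.
by rewrite modnDr.
Qed.

Section Main.
Variables (R : realType) (AP : finType) (D : eqType) (eta : D -> nat -> R).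

Fixpoint tr (f : dform AP D) : dform AP D * dform AP D :=
  match f with
  | FTrue => (FTrue, FNot FTrue)
  | FAtom p => (FAtom D p, FNot (FAtom D p))
  | FNot g => ((tr g).2, (tr g).1)
  | FOr g h => (FOr (tr g).1 (tr h).1, FNot (FOr (FNot (tr g).2) (FNot (tr h).2)))
  | FNext g => (FNext (tr g).1, FNext (tr g).2)
  | FUntil g h => (FUntil (tr g).1 (tr h).1, FNot (FUntil (FNot (tr g).2) (FNot (tr h).2)))
  | FUntilD d g h => (FUntil (tr g).1 (tr h).1, if eta d 0%N == 1 then (tr h).2 else FTrue)
  end.

Lemma tr_ltl f : is_ltl (tr f).1 && is_ltl (tr f).2.
Proof.
elim: f => [|p|g IH|g IHg h IHh|g IH|g IHg h IHh|d g IHg h IHh] //=.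
- by rewrite andbC.
all: try (case/andP: IHg => H1 H2; case/andP: IHh => H3 H4;
  rewrite ?H1 ?H2 ?H3 ?H4 //; case: ifP => //).
Qed.

Notation v f pi := (dval eta f pi).

Lemma dval_U (g h : dform AP D) (pi : computation AP) : v (FUntil g h) pi = U (fun j => v g (sfx pi j)) (fun i => v h (sfx pi i)).
Proof. by []. Qed.
Lemma dval_UD d (g h : dform AP D) (pi : computation AP) : v (FUntilD d g h) pi =
  U (fun j => eta d j * v g (sfx pi j)) (fun i => eta d i * v h (sfx pi i)).
Proof. by []. Qed.

Lemma dval_Not (X : dform AP D) (pi : computation AP) : v (FNot X) pi = 1 - v X pi.
Proof. by []. Qed.

Lemma dval_01 (heta : forall d, discounting (eta d)) (f : dform AP D) (pi : computation AP) : 0 <= v f pi <= 1.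
Proof.
elim: f pi => [|p|g IH|g IHg h IHh|g IH|g IHg h IHh|d g IHg h IHh] pi; rewrite ?dval_U ?dval_UD /=.
- by rewrite ler01 lexx.
- by case: ifP; rewrite ?ler01 ?lexx.
- by case/andP: (IH pi) => h1 h2; apply/andP; split; lra.
- by rewrite le_max ge_max; case/andP: (IHg pi) => -> ->; case/andP: (IHh pi) => -> ->.
- exact: IH.
- by apply: U_01 => i; [exact: IHg|exact: IHh].
- have [e01 _] := heta d.
  apply: U_01 => i; [case/andP: (IHg (sfx pi i)) | case/andP: (IHh (sfx pi i))];
    case/andP: (e01 i) => h1 h2 h3 h4; apply/andP; split; nra.
Qed.

Lemma ltl01 (heta : forall d, discounting (eta d)) (f : dform AP D) (pi : computation AP) : is_ltl f -> v f pi = 0 \/ v f pi = 1.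
Proof.
elim: f pi => [|p|g IH|g IHg h IHh|g IH|g IHg h IHh|d g IHg h IHh] pi; rewrite ?dval_U ?dval_UD //=.
- by right.
- by case: ifP; [right|left].
- by move=> /(IH pi) [] ->; [right|left]; lra.
- move=> /andP[Hg Hh]; have hg := fun p => IHg p Hg; have hh := fun p => IHh p Hh.
  case: (hg pi) => ->; case: (hh pi) => ->;
  rewrite ?maxxx ?(max_idPr ler01) ?(max_idPl ler01); by [left|right].
- exact: IH.
- move=> /andP[Hg Hh]; have hg := fun p => IHg p Hg; have hh := fun p => IHh p Hh.
  have ha : in01 (fun j => v g (sfx pi j)) by move=> j; exact: dval_01.
  have hb : in01 (fun j => v h (sfx pi j)) by move=> j; exact: dval_01.
  case: (ltP 0 (U (fun j => v g (sfx pi j)) (fun j => v h (sfx pi j)))) => H.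
    right; apply: U_1 => //.
    have [i [h1 h2]] := (U_pos ha hb).1 H.
    exists i; split; first by case: (hh (sfx pi i)) h1 => ->; rewrite ?ltxx.
    by move=> j /h2; case: (hg (sfx pi j)) => ->; rewrite ?ltxx.
  left; apply/eqP; rewrite eq_le H; by case/andP: (U_01 ha hb).
Qed.


Lemma not_lt1 (x : R) : x <= 1 -> ~ x < 1 -> x = 1.
Proof. by move=> h1 h2; apply/eqP; rewrite eq_le h1 leNgt; apply/negP. Qed.

Lemma main (heta : forall d, discounting (eta d)) (f : dform AP D) (pi : computation AP) :
  [/\ 0 < v f pi -> v (tr f).1 pi = 1, v f pi < 1 -> v (tr f).2 pi = 1,
      eper pi -> v (tr f).1 pi = 1 -> 0 < v f pi &
      eper pi -> v (tr f).2 pi = 1 -> v f pi < 1].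
Proof.
have b01 := dval_01 heta.
have L01 := ltl01 heta.
have lt1 := tr_ltl.
elim: f pi => [|p|g IH|g IHg h IHh|g IH|g IHg h IHh|d g IHg h IHh] pi.
- split => //=; [by rewrite ltxx| move=> _ ; lra].
- rewrite /=; case: ifP => _; split => //; rewrite ?ltxx //; lra.
- rewrite /=; case: (IH pi) => A B C Dd; have := b01 g pi => /andP[h1 h2].
  split.
  + by move=> H; apply: B; lra.
  + by move=> H; apply: A; lra.
  + by move=> ep /(Dd ep) H; lra.
  + by move=> ep /(C ep) H; lra.
- rewrite /=; case: (IHg pi) => A B C Dd; case: (IHh pi) => A' B' C' D'.
  have := b01 (tr g).2 pi => /andP[g1 g2]; have := b01 (tr h).2 pi => /andP[h1 h2].
  have := b01 (tr g).1 pi => /andP[g3 g4]; have := b01 (tr h).1 pi => /andP[h3 h4].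
  split.
  + rewrite lt_max => /orP[/A|/A'] ->; by rewrite ?maxxx ?(max_idPr g4) ?(max_idPl h4).
  + by rewrite gt_max => /andP[/B -> /B' ->]; rewrite subrr maxxx subr0.
  + move=> ep; have [hm|hm] := leP (v (tr g).1 pi) (v (tr h).1 pi).
      by move=> /(C' ep) H; rewrite lt_max H orbT.
    by move=> /(C ep) H; rewrite lt_max H.
  + move=> ep H.
    have : Order.max (1 - v (tr g).2 pi) (1 - v (tr h).2 pi) <= 0 by lra.
    rewrite ge_max => /andP[k1 k2].
    by rewrite gt_max Dd ?D' //; lra.
- rewrite /=; case: (IH (sfx pi 1)) => A B C Dd; split => // ep;
    [exact: C (eper_suffix 1 ep)|exact: Dd (eper_suffix 1 ep)].
- have E1 : (tr (FUntil g h)).1 = FUntil (tr g).1 (tr h).1 by [].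
  have E2 : (tr (FUntil g h)).2 = FNot (FUntil (FNot (tr g).2) (FNot (tr h).2)) by [].
  rewrite E1 E2 dval_Not !dval_U.
  set a := fun j => v g (sfx pi j); set b := fun j => v h (sfx pi j).
  have ha : in01 a by move=> j; exact: b01.
  have hb : in01 b by move=> j; exact: b01.
  have hpa : in01 (fun j => v (tr g).1 (sfx pi j)) by move=> j; exact: b01.
  have hpb : in01 (fun j => v (tr h).1 (sfx pi j)) by move=> j; exact: b01.
  have hla : in01 (fun j => v (FNot (tr g).2) (sfx pi j)) by move=> j; exact: b01.
  have hlb : in01 (fun j => v (FNot (tr h).2) (sfx pi j)) by move=> j; exact: b01.
  have lg1 : is_ltl (tr g).1 by case/andP: (lt1 g).
  have lg2 : is_ltl (tr g).2 by case/andP: (lt1 g).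
  have lh1 : is_ltl (tr h).1 by case/andP: (lt1 h).
  have lh2 : is_ltl (tr h).2 by case/andP: (lt1 h).
  have pos1 : forall (X : dform AP D) (p : computation AP), is_ltl X -> 0 < v X p -> v X p = 1.
    by move=> X p lX; case: (L01 X p lX) => ->; rewrite ?ltxx.
  split.
  + move=> /(U_pos ha hb) [i [h1 h2]]; apply: U_1 => //; exists i; split.
      by case: (IHh (sfx pi i)) => + _ _ _; apply.
    by move=> j /h2 H; case: (IHg (sfx pi j)) => + _ _ _; apply.
  + move=> H.
    have -> : U (fun j => v (FNot (tr g).2) (sfx pi j)) (fun j => v (FNot (tr h).2) (sfx pi j)) = 0.
      have [//|H1] := L01 (FUntil (FNot (tr g).2) (FNot (tr h).2)) pi ltac:(by rewrite /= lg2 lh2).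
      move: H1; rewrite dval_U /= => H1.
      have : 0 < U (fun j => v (FNot (tr g).2) (sfx pi j)) (fun j => v (FNot (tr h).2) (sfx pi j)).
        by rewrite H1 ltr01.
      move=> /(U_pos hla hlb) [i [h1 h2]].
      have : U a b = 1.
        apply: U_1 => //; exists i; split.
          apply: not_lt1; first by case/andP: (hb i).
          by case: (IHh (sfx pi i)) => _ + _ _ => K /K K'; move: h1; rewrite dval_Not K'; lra.
        move=> j /h2 h3; apply: not_lt1; first by case/andP: (ha j).
        by case: (IHg (sfx pi j)) => _ + _ _ => K /K K'; move: h3; rewrite dval_Not K'; lra.
      by move=> E; move: H; rewrite E ltxx.
    by rewrite subr0.
  + move=> ep H.
    have : 0 < U (fun j => v (tr g).1 (sfx pi j)) (fun j => v (tr h).1 (sfx pi j)) by rewrite H ltr01.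
    move=> /(U_pos hpa hpb) [i [h1 h2]].
    apply/(U_pos ha hb); exists i; split.
      by case: (IHh (sfx pi i)) => _ _ + _; apply; [exact: eper_suffix|exact: pos1].
    move=> j /h2 h3.
    by case: (IHg (sfx pi j)) => _ _ + _; apply; [exact: eper_suffix|exact: pos1].
  + move=> ep H.
    have H0 : U (fun j => v (FNot (tr g).2) (sfx pi j)) (fun j => v (FNot (tr h).2) (sfx pi j)) = 0.
      by move: H; lra.
    case: (ltP (U a b) 1) => // H1.
    have E : U a b = 1 by apply/eqP; rewrite eq_le H1 andbT; case/andP: (U_01 ha hb).
    have [N hN] := eper_fin ep.
    have [i [h1 h2]] := U_1_inv ha hb (N := N)
      ltac:(by move=> i; case: (hN i) => i' [k1 k2 k3]; exists i'; split => //; rewrite /b k3) E.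
    have : U (fun j => v (FNot (tr g).2) (sfx pi j)) (fun j => v (FNot (tr h).2) (sfx pi j)) = 1.
      apply: U_1 => //; exists i; split.
        case: (L01 (tr h).2 (sfx pi i) lh2) => [E0|K]; first by rewrite dval_Not E0 subr0.
        by case: (IHh (sfx pi i)) => _ _ _ /(_ (eper_suffix i ep) K); have h1' : v h (sfx pi i) = 1 := h1; rewrite h1' ltxx.
      move=> j /h2 h3.
      case: (L01 (tr g).2 (sfx pi j) lg2) => [E0|K]; first by rewrite dval_Not E0 subr0.
      by case: (IHg (sfx pi j)) => _ _ _ /(_ (eper_suffix j ep) K); have h3' : v g (sfx pi j) = 1 := h3; rewrite h3' ltxx.
    by rewrite H0 => /eqP; rewrite eq_sym oner_eq0.
- have E1 : (tr (FUntilD d g h)).1 = FUntil (tr g).1 (tr h).1 by [].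
  have E2 : (tr (FUntilD d g h)).2 = if eta d 0%N == 1 then (tr h).2 else FTrue by [].
  rewrite E1 E2 dval_U dval_UD.
  have [e01 [edec _]] := heta d.
  have epos : forall i, 0 < eta d i.
    by move=> i; apply: le_lt_trans (edec i i.+1 (ltnSn i)); case/andP: (e01 i.+1).
  have e1lt : eta d 1%N < 1.
    by apply: lt_le_trans (edec 0%N 1%N isT) _; case/andP: (e01 0%N).
  have ele1 : forall i, (0 < i)%N -> eta d i <= eta d 1%N.
    move=> [|[|i]] // _.
    exact: ltW (edec 1%N i.+2 isT).
  set a := fun j => eta d j * v g (sfx pi j); set b := fun j => eta d j * v h (sfx pi j).
  have ha : in01 a.
    move=> j; case/andP: (e01 j) => h1 h2; case/andP: (b01 g (sfx pi j)) => h3 h4.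
    rewrite /a; apply/andP; split; nra.
  have hb : in01 b.
    move=> j; case/andP: (e01 j) => h1 h2; case/andP: (b01 h (sfx pi j)) => h3 h4.
    rewrite /b; apply/andP; split; nra.
  have hc : forall i, (0 < i)%N -> b i <= eta d 1%N.
    move=> i /ele1 H; case/andP: (e01 i) => h1 h2; case/andP: (b01 h (sfx pi i)) => h3 h4.
    rewrite /b; nra.
  have hlt := U_lt1_disc ha hb hc e1lt.
  have hpa : in01 (fun j => v (tr g).1 (sfx pi j)) by move=> j; exact: b01.
  have hpb : in01 (fun j => v (tr h).1 (sfx pi j)) by move=> j; exact: b01.
  have lg1 : is_ltl (tr g).1 by case/andP: (lt1 g).
  have lh1 : is_ltl (tr h).1 by case/andP: (lt1 h).
  have pos1 : forall (X : dform AP D) (p : computation AP), is_ltl X -> 0 < v X p -> v X p = 1.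
    by move=> X p lX; case: (L01 X p lX) => ->; rewrite ?ltxx.
  split.
  + move=> /(U_pos ha hb) [i [h1 h2]]; apply: U_1 => //; exists i; split.
      case: (IHh (sfx pi i)) => + _ _ _; apply.
      by move: h1; rewrite /b (pmulr_rgt0 _ (epos i)).
    move=> j /h2 H; case: (IHg (sfx pi j)) => + _ _ _; apply.
    by move: H; rewrite /a (pmulr_rgt0 _ (epos j)).
  + case: eqP => e0 //.
    move=> /hlt H.
    have H' : v h (sfx pi 0) < 1 by move: H; rewrite /b e0 mul1r.
    case: (IHh (sfx pi 0)) => _ + _ _ => K; rewrite -{1}(suffix0 pi); exact: K.
  + move=> ep H.
    have : 0 < U (fun j => v (tr g).1 (sfx pi j)) (fun j => v (tr h).1 (sfx pi j)) by rewrite H ltr01.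
    move=> /(U_pos hpa hpb) [i [h1 h2]].
    apply/(U_pos ha hb); exists i; split.
      rewrite /b (pmulr_rgt0 _ (epos i)).
      by case: (IHh (sfx pi i)) => _ _ + _; apply; [exact: eper_suffix|exact: pos1].
    move=> j /h2 h3; rewrite /a (pmulr_rgt0 _ (epos j)).
    by case: (IHg (sfx pi j)) => _ _ + _; apply; [exact: eper_suffix|exact: pos1].
  + case: eqP => e0 ep H; apply/hlt; rewrite /b.
      rewrite e0 mul1r; case: (IHh (sfx pi 0)) => _ _ _; apply; first exact: eper_suffix.
      by rewrite suffix0.
    have e0lt : eta d 0%N < 1.
      by rewrite lt_neqAle; case/andP: (e01 0%N) => _ ->; rewrite andbT; apply/eqP.
    case/andP: (e01 0%N) => h1 h2; case/andP: (b01 h (sfx pi 0)) => h3 h4; nra.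
Qed.


Definition tops (f : dform AP D) : seq (dform AP D) :=
  match f with
  | FTrue => [:: FTrue; FNot FTrue]
  | FAtom p => [:: FAtom D p; FNot (FAtom D p)]
  | FNot _ => [::]
  | FOr g h => [:: (tr f).1; (tr f).2; FOr (FNot (tr g).2) (FNot (tr h).2); FNot (tr g).2; FNot (tr h).2]
  | FNext g => [:: (tr f).1; (tr f).2]
  | FUntil g h => [:: (tr f).1; (tr f).2; FUntil (FNot (tr g).2) (FNot (tr h).2);
                     FNot (tr g).2; FNot (tr h).2]
  | FUntilD _ g h => [:: (tr f).1; FTrue]
  end.

Definition T (f : dform AP D) := flatten (map tops (subforms f)).
Arguments T : simpl never.

Lemma T1 f : T f = tops f ++ flatten (map tops (behead (subforms f))).
Proof. by case: f. Qed.

Lemma Tsub2 f g h : behead (subforms f) = subforms g ++ subforms h ->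
  {subset T g <= T f} /\ {subset T h <= T f}.
Proof.
move=> E; rewrite [T f]T1 E map_cat flatten_cat; split=> x H; rewrite !mem_cat H ?orbT //.
Qed.

Lemma Tsub1 f g : behead (subforms f) = subforms g -> {subset T g <= T f}.
Proof. by move=> E x H; rewrite [T f]T1 E mem_cat H orbT. Qed.

Lemma Ttop f x : x \in tops f -> x \in T f.
Proof. by move=> H; rewrite T1 mem_cat H. Qed.

Lemma T_cover f : all (mem (T f)) (subforms (tr f).1) && all (mem (T f)) (subforms (tr f).2).
Proof.
elim: f => [|p|g IH|g IHg h IHh|g IH|g IHg h IHh|d g IHg h IHh].
- by rewrite /= ?Ttop // !inE eqxx ?orbT.
- by rewrite /= ?Ttop // !inE eqxx ?orbT.
- have S := Tsub1 (f := FNot g) erefl.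
  case/andP: IH => g1 g2; rewrite /=.
  by rewrite (sub_all S g1) (sub_all S g2).
- have [Sg Sh] := Tsub2 (f := FOr g h) erefl.
  case/andP: IHg => g1 g2; case/andP: IHh => h1 h2.
  rewrite /= !all_cat /= ?(sub_all Sg g1) ?(sub_all Sg g2) ?(sub_all Sh h1) ?(sub_all Sh h2) /=.
  by rewrite ?Ttop // !inE eqxx ?orbT.
- have S := Tsub1 (f := FNext g) erefl.
  case/andP: IH => g1 g2; rewrite /=.
  by rewrite (sub_all S g1) (sub_all S g2) ?Ttop // !inE eqxx ?orbT.
- have [Sg Sh] := Tsub2 (f := FUntil g h) erefl.
  case/andP: IHg => g1 g2; case/andP: IHh => h1 h2.
  rewrite /= !all_cat /= ?(sub_all Sg g1) ?(sub_all Sg g2) ?(sub_all Sh h1) ?(sub_all Sh h2) /=.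
  by rewrite ?Ttop // !inE eqxx ?orbT.
- have [Sg Sh] := Tsub2 (f := FUntilD d g h) erefl.
  case/andP: IHg => g1 g2; case/andP: IHh => h1 h2.
  rewrite /= !all_cat /= ?(sub_all Sg g1) ?(sub_all Sh h1) /=.
  rewrite ?Ttop // ?inE ?eqxx ?orbT //.
  case: ifP => _; first exact: (sub_all Sh h2).
  by rewrite /= ?Ttop // !inE eqxx ?orbT.
Qed.

Lemma size_flat_tops (s : seq (dform AP D)) : (size (flatten (map tops s)) <= 5 * size s)%N.
Proof.
elim: s => //= x s IH; rewrite size_cat mulnS.
apply: leq_add IH; by case: x.
Qed.

Lemma fsize_tr f : (fsize (tr f).1 <= 5 * fsize f)%N /\ (fsize (tr f).2 <= 5 * fsize f)%N.
Proof.
have key : forall X, all (mem (T f)) (subforms X) -> (fsize X <= 5 * fsize f)%N.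
  move=> X /allP H; apply: leq_trans (size_flat_tops (undup (subforms f))).
  apply: uniq_leq_size; first exact: undup_uniq.
  move=> x; rewrite mem_undup => /H; rewrite /T => /flatten_mapP [y yin xin].
  by apply/flatten_mapP; exists y; rewrite ?mem_undup.
by case/andP: (T_cover f) => /key H1 /key H2.
Qed.

End Main.

Theorem lemma1 :
  exists C : nat,
  forall (R : realType) (AP : finType) (D : eqType) (eta : D -> nat -> R),
    injective eta ->
    (forall d, discounting (eta d)) ->
  forall phi : dform AP D,
  exists phi_pos phi_lt1 : dform AP D,
    [/\ is_ltl phi_pos, is_ltl phi_lt1,
        (fsize phi_pos <= C * fsize phi)%N,
        (fsize phi_lt1 <= C * fsize phi)%N &
    forall pi : computation AP,
      [/\ 0 < dval eta phi pi -> models eta pi phi_pos,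
          dval eta phi pi < 1 -> models eta pi phi_lt1,
          is_lasso pi -> models eta pi phi_pos -> 0 < dval eta phi pi &
          is_lasso pi -> models eta pi phi_lt1 -> dval eta phi pi < 1]].
Proof.
exists 5%N => R AP D eta _ heta phi.
exists (tr eta phi).1, (tr eta phi).2.
have /andP[l1 l2] := tr_ltl eta phi.
have [s1 s2] := fsize_tr eta phi.
split => // pi.
have [A B C Dd] := main heta phi pi.
rewrite /models; split => //; move=> /lasso_eper ep; [exact: C | exact: Dd].
Qed.
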